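(* Let $x\in\Gamma$ and let $r$ be an eigenvalue of the finite symmetric matrix $J_x$. Then at least one of the following holds: (a) $P_{x,x'}(r)=0$; (b) there exist a vertex $y\in\Gamma_x$ and two distinct vertices $y_1,y_2\in N_y$ such that $P_{y_1,y}(r)=P_{y_2,y}(r)=0$.
   Context: Let $\Gamma$ be an infinite connected tree whose vertices are arranged in levels $\ell(x)\in\{0,1,2,\dots\}$: every vertex $x$ is adjacent to exactly one vertex $x'$ with $\ell(x')=\ell(x)+1$; for $\ell(x)\ge 1$ the set $N_x=\{y:\ y'=x\}$ of neighbours of $x$ on level $\ell(x)-1$ is finite and nonempty; $N_x=\emptyset$ if $\ell(x)=0$; there are no other edges. For $x\in\Gamma$, $\Gamma_x$ is the finite subtree consisting of $x$ and all its descendants, and $\Gamma'_x=\Gamma_x\cup\{x'\}$. Fix numbers $\lambda_x>0$ and $\beta_x\in\mathbb R$, $x\in\Gamma$. The Jacobi matrix $J$ acts on functions $v:\Gamma\to\mathbb C$ by $(Jv)(x)=\lambda_x v(x')+\beta_x v(x)+\sum_{y\in N_x}\lambda_y v(y)$. For $x\in\Gamma$, $J_x=P_xJP_x$ restricted to $\ell^2(\Gamma_x)$, where $P_x$ is the orthogonal projection of $\ell^2(\Gamma)$ onto $\ell^2(\Gamma_x)$; i.e. for $w:\Gamma_x\to\mathbb C$ and $t\in\Gamma_x$, $(J_xw)(t)=\beta_tw(t)+\sum_{s\in N_t}\lambda_sw(s)+\lambda_tw(t')$, where the last term is omitted when $t=x$. The polynomials $P_{x,t}$ ($x\in\Gamma$,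 $t\in\Gamma'_x$) are defined recursively on $\ell(x)$: if $\ell(x)=0$, $P_{x,x}=1$, $P_{x,x'}(z)=(z-\beta_x)/\lambda_x$. If $\ell(x)\ge1$: $P_{x,x}$ is the monic least common multiple of $\{P_{y,x}:\ y\in N_x\}$; for $y\in N_x$ and $t\in\Gamma_y$, $P_{x,t}=P_{x,x}P_{y,t}/P_{y,x}$; and $P_{x,x'}=\lambda_x^{-1}\big((z-\beta_x)P_{x,x}-\sum_{y\in N_x}\lambda_yP_{x,y}\big)$. (These are polynomials with real coefficients.) *)

(* Defs.v *)
From HB Require Import structures.
From mathcomp Require Import all_boot all_order all_algebra.
Set Implicit Arguments. Unset Strict Implicit. Unset Printing Implicit Defensive.
Import Order.TTheory GRing.Theory Num.Theory.
Local Open Scope ring_scope.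

(* Level tree: vertices V, parent map par (x |-> x'), levels lev,
   ch x = duplicate-free enumeration of N_x = {y | par y = x}. *)
Definition level_tree (V : eqType) (par : V -> V) (lev : V -> nat)
    (ch : V -> seq V) : Prop :=
  [/\ (forall x, lev (par x) = (lev x).+1)%N,
      (forall x, uniq (ch x)),
      (forall x y, (y \in ch x) = (par y == x)),
      (forall x, (0 < lev x)%N -> ch x != [::]) &
      (forall a b, exists m n, iter m par a = iter n par b)].

(* t is in Gamma_x (t is x or a descendant of x). *)
Definition in_sub (V : Type) (par : V -> V) (x t : V) : Prop :=
  exists k, iter k par t = x.

Section Polys.
Variable R : fieldType.

Definition lcmp2 (p q : {poly R}) : {poly R} := (p * q) %/ gcdp p q.
Definition mlcm (s : seq {poly R}) : {poly R} :=
  let l := foldr lcmp2 1 s in (lead_coef l)^-1 *: l.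

Variables (V : eqType) (par : V -> V) (lev : V -> nat) (ch : V -> seq V)
  (lam beta : V -> R).

(* Pol n x t = P_{x,t}, intended for n = lev x and t in Gamma'_x
   (value 0 / unspecified elsewhere). For t in Gamma_y, y in N_x,
   y is the ancestor of t at level lev x - 1 = n - 1. *)
Fixpoint Pol (n : nat) (x t : V) : {poly R} :=
  match n with
  | 0 => if t == x then 1
         else if t == par x then (lam x)^-1 *: ('X - (beta x)%:P)
         else 0
  | m.+1 =>
      let Pxx := mlcm [seq Pol m y x | y <- ch x] in
      let Pxt := fun y t => (Pxx * Pol m y t) %/ Pol m y x in
      if t == x then Pxx
      else if t == par x then
        (lam x)^-1 *: (('X - (beta x)%:P) * Pxx
                       - \sum_(y <- ch x) (lam y) *: Pxt y y)
      else Pxt (iter (m - lev t) par t) t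
  end.

Definition P (x t : V) : {poly R} := Pol (lev x) x t.

Definition eigenvalue_Jx (x : V) (r : R) : Prop :=
  exists w : V -> R,
    (forall t, ~ in_sub par x t -> w t = 0) /\
    (exists t, in_sub par x t /\ w t != 0) /\
    (forall t, in_sub par x t ->
       beta t * w t + \sum_(s <- ch t) lam s * w s
       + (if t == x then 0 else lam t * w (par t)) = r * w t).
End Polys.

(* Main.v *)
Require Import Defs.
From HB Require Import structures.
From mathcomp Require Import all_boot all_order all_algebra.
From mathcomp Require Import ring zify.
Import Order.TTheory GRing.Theory Num.Theory.
Local Open Scope ring_scope.
Set Implicit Arguments. Unset Strict Implicit.

Lemma lev_iter (V : Type) (par : V -> V) (lev : V -> nat)
  (Hl : forall x, lev (par x) = (lev x).+1) k t :
  lev (iter k par t) = (lev t + k)%N.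
Proof. elim: k => [|k IH] /=; first by rewrite addn0. by rewrite Hl IH addnS. Qed.

Lemma in_sub_lev (V : Type) (par : V -> V) (lev : V -> nat)
  (Hl : forall x, lev (par x) = (lev x).+1) x t :
  in_sub par x t -> (lev t <= lev x)%N /\ iter (lev x - lev t) par t = x.
Proof.
case=> k Hk; have := lev_iter Hl k t; rewrite Hk => ->.
by rewrite leq_addr addKn.
Qed.

Lemma in_sub_refl (V : Type) (par : V -> V) x : in_sub par x x.
Proof. by exists 0%N. Qed.

Lemma in_sub_par (V : Type) (par : V -> V) x t :
  in_sub par x (par t) -> in_sub par x t.
Proof. by case=> k Hk; exists k.+1; rewrite iterSr. Qed.

Lemma in_sub_par' (V : eqType) (par : V -> V) x t :
  in_sub par x t -> t != x -> in_sub par x (par t).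
Proof.
case=> [[|k] Hk] Htx; first by rewrite -Hk eqxx in Htx.
by exists k; rewrite -iterSr.
Qed.

Lemma in_sub_trans (V : Type) (par : V -> V) x y t :
  in_sub par x y -> in_sub par y t -> in_sub par x t.
Proof. by case=> a Ha [b Hb]; exists (a + b)%N; rewrite iterD Hb. Qed.

Lemma not_in_sub_par (V : Type) (par : V -> V) (lev : V -> nat)
  (Hl : forall x, lev (par x) = (lev x).+1) x : ~ in_sub par x (par x).
Proof. move=> /(in_sub_lev Hl) [] ; by rewrite Hl ltnn. Qed.

Lemma in_sub_ne (V : eqType) (par : V -> V) (lev : V -> nat)
  (Hl : forall x, lev (par x) = (lev x).+1) x t :
  in_sub par x t -> t != x -> (lev t < lev x)%N.
Proof.
move=> Hs Htx; have [Hle Hit] := in_sub_lev Hl Hs.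
rewrite ltn_neqAle Hle andbT; apply/eqP=> E; move: Hit; rewrite E subnn /= => E'.
by rewrite E' eqxx in Htx.
Qed.

Lemma anc_ch (V : eqType) (par : V -> V) (lev : V -> nat) (ch : V -> seq V)
  (Ht : level_tree par lev ch) x m t :
  lev x = m.+1 -> in_sub par x t -> t != x ->
  iter (m - lev t) par t \in ch x /\ in_sub par (iter (m - lev t) par t) t.
Proof.
case: Ht => Hl _ Hch _ _ Hx Hs Htx.
have Hlt := in_sub_ne Hl Hs Htx; have [_ Hit] := in_sub_lev Hl Hs.
split; last by exists (m - lev t)%N.
rewrite Hch; apply/eqP; rewrite -iterS -Hit Hx subSn //; by rewrite -ltnS -Hx.
Qed.

Lemma anc_unique (V : eqType) (par : V -> V) (lev : V -> nat)
  (Hl : forall x, lev (par x) = (lev x).+1) y u :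
  in_sub par y u -> iter (lev y - lev u) par u = y.
Proof. by move/(in_sub_lev Hl) => []. Qed.
Lemma lcmp2_dvdl (R : fieldType) (p q : {poly R}) : p %| lcmp2 p q.
Proof.
rewrite /lcmp2; have [/eqP|g0] := eqVneq (gcdp p q) 0.
  by rewrite gcdp_eq0 => /andP [/eqP -> /eqP ->]; rewrite mul0r div0p dvdpp.
by rewrite -divp_mulA ?dvdp_gcdr // dvdp_mulIl.
Qed.

Lemma lcmp2_dvdr (R : fieldType) (p q : {poly R}) : q %| lcmp2 p q.
Proof.
rewrite /lcmp2; have [/eqP|g0] := eqVneq (gcdp p q) 0.
  by rewrite gcdp_eq0 => /andP [/eqP -> /eqP ->]; rewrite mul0r div0p dvdpp.
by rewrite -divp_mulAC ?dvdp_gcdl // dvdp_mulIr.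
Qed.

Lemma mlcm_dvd (R : fieldType) (s : seq {poly R}) p : p \in s -> p %| mlcm s.
Proof.
move=> ps; have : p %| foldr (@lcmp2 R) 1 s.
  elim: s ps => [|a s IH] //=; rewrite inE => /orP [/eqP ->|/IH H].
    exact: lcmp2_dvdl.
  exact: dvdp_trans H (lcmp2_dvdr _ _).
rewrite /mlcm; set l := foldr _ _ _ => H.
by rewrite -mul_polyC (dvdp_trans H) // dvdp_mulIr.
Qed.

Definition JRel (R : fieldType) (V : eqType) (par : V -> V) (ch : V -> seq V)
  (lam beta : V -> R) (Q : V -> {poly R}) t :=
  beta t *: Q t + \sum_(s <- ch t) lam s *: Q s + lam t *: Q (par t) = 'X * Q t.

Lemma Jrel (R : fieldType) (V : eqType) (par : V -> V) (lev : V -> nat)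
    (ch : V -> seq V) (lam beta : V -> R) (Ht : level_tree par lev ch)
    (Hlam : forall x, lam x != 0) n :
  forall x, lev x = n -> forall t, in_sub par x t ->
  JRel par ch lam beta (Pol par lev ch lam beta n x) t.
Proof.
have Ht' := Ht; case: Ht' => Hl Hu Hch Hne Hcon.
have parx x : (par x == x) = false.
  by apply/negbTE/eqP => E; have := Hl x; rewrite E => /n_Sn.
elim: n => [|m IH] x Hx t Hs.
  have [Hle Hit] := in_sub_lev Hl Hs.
  move: Hle; rewrite Hx leqn0 => /eqP H0; move: Hit; rewrite Hx H0 /= => Etx.
  subst t; rewrite /JRel.
  have -> : ch x = [::].
    case E: (ch x) => [|s ss] //; have : s \in ch x by rewrite E inE eqxx.
    by rewrite Hch => /eqP Hs'; move: (Hl s); rewrite Hs' Hx.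
  rewrite /= eqxx parx eqxx big_nil addr0 scalerA mulfV // scale1r.
  by rewrite -alg_polyC mulr1 addrC subrK.
set Pxx := mlcm [seq Pol par lev ch lam beta m y x | y <- ch x].
have PolSx : Pol par lev ch lam beta m.+1 x x = Pxx by rewrite /= eqxx.
have PolSo u : u != x -> u != par x ->
   Pol par lev ch lam beta m.+1 x u =
   (Pxx * Pol par lev ch lam beta m (iter (m - lev u) par u) u)
     %/ Pol par lev ch lam beta m (iter (m - lev u) par u) x.
  by move=> /negbTE H1 /negbTE H2; rewrite /= H1 H2.
have levch y : y \in ch x -> lev y = m.
  by rewrite Hch => /eqP E; move: (Hl y); rewrite E Hx => -[].
have dvd y : y \in ch x -> Pol par lev ch lam beta m y x %| Pxx.
  by move=> yc; apply: mlcm_dvd; apply: map_f.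
have C y u : y \in ch x -> in_sub par y u \/ u = x ->
    Pol par lev ch lam beta m.+1 x u =
    (Pxx %/ Pol par lev ch lam beta m y x) * Pol par lev ch lam beta m y u.
  move=> yc [Hsu|->]; last by rewrite PolSx divpK // dvd.
  have [Hle Hit] := in_sub_lev Hl Hsu.
  rewrite (levch y yc) in Hle Hit.
  have ux : u != x by apply/eqP => E; move: Hle; rewrite E Hx ltnn.
  have upx : u != par x by apply/eqP => E; move: Hle; rewrite E Hl Hx ltnNge leqW.
  by rewrite PolSo // Hit divp_mulAC ?dvd // mulrC.
have [->|tx] := eqVneq t x.
  rewrite /JRel PolSx.
  have -> : Pol par lev ch lam beta m.+1 x (par x) =
     (lam x)^-1 *: (('X - (beta x)%:P) * Pxx -
       \sum_(y <- ch x) lam y *: ((Pxx * Pol par lev ch lam beta m y y)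
           %/ Pol par lev ch lam beta m y x)).
    by rewrite /= parx eqxx.
  rewrite (eq_big_seq (fun y => lam y *: ((Pxx * Pol par lev ch lam beta m y y)
           %/ Pol par lev ch lam beta m y x))); last first.
    move=> s sc; rewrite PolSo.
    - by rewrite levch // subnn.
    - by apply/eqP=> E; move: (levch _ sc); rewrite E Hx => /esym /n_Sn.
    by apply/eqP=> E; move: (levch _ sc); rewrite E Hl Hx; lia.
  rewrite [lam x *: _]scalerA mulfV // scale1r -mul_polyC.
  set S := \sum_(_ <- _) _. ring.
have [yc Hsy] := anc_ch Ht Hx Hs tx.
set y := iter _ par t in yc Hsy.
have Hly := levch _ yc.
set c := Pxx %/ Pol par lev ch lam beta m y x.
have IHy := IH y Hly t Hsy.
have Ept : Pol par lev ch lam beta m.+1 x (par t) = c * Pol par lev ch lam beta m y (par t).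
  apply: C => //.
  have [E|ty] := eqVneq t y; first by right; rewrite E; apply/eqP; rewrite -Hch.
  by left; apply: in_sub_par'.
rewrite /JRel (C y t) // ?Ept; last by left.
rewrite (eq_big_seq (fun s => lam s *: (c * Pol par lev ch lam beta m y s))); last first.
  move=> s sc; rewrite (C y) //; left; apply: in_sub_par.
  by move: sc; rewrite Hch => /eqP ->.
under eq_bigr do rewrite scalerAr.
rewrite -mulr_sumr !scalerAr -!mulrDr.
rewrite /JRel in IHy; rewrite IHy; ring.
Qed.

Lemma key1 (R : fieldType) (V : eqType) (par : V -> V) (lev : V -> nat)
    (ch : V -> seq V) (lam beta : V -> R) (Ht : level_tree par lev ch)
    (Hlam : forall x, lam x != 0) x r (w : V -> R)
  (H0 : forall t, ~ in_sub par x t -> w t = 0)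
  (Heq : forall t, in_sub par x t -> beta t * w t + \sum_(s <- ch t) lam s * w s
       + (if t == x then 0 else lam t * w (par t)) = r * w t)
  (wx : w x != 0) : (P par lev ch lam beta x (par x)).[r] = 0.
Proof.
have Ht' := Ht; case: Ht' => Hl Hu Hch Hne Hcon.
set v := fun t => (Pol par lev ch lam beta (lev x) x t).[r].
have Ev t : in_sub par x t ->
   beta t * v t + \sum_(s <- ch t) lam s * v s + lam t * v (par t) = r * v t.
  move=> Hs; have := @Jrel _ _ par lev ch lam beta Ht Hlam (lev x) x erefl t Hs; rewrite /JRel => /(congr1 (horner^~ r)).
  rewrite !hornerD !hornerZ horner_sum [('X * _)]mulrC hornerMX => E; rewrite /v [r * _]mulrC -E;
     congr (_ + _ + _); apply: eq_bigr => s _; by rewrite hornerZ.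
have wpx : w (par x) = 0 by apply: H0; apply: (not_in_sub_par Hl).
have Ew t : in_sub par x t ->
   beta t * w t + \sum_(s <- ch t) lam s * w s + lam t * w (par t) = r * w t.
  move=> Hs; rewrite -Heq //; case: eqP => [->|//]; by rewrite wpx mulr0.
set F := fun t => lam t * (v (par t) * w t - w (par t) * v t).
have Floc t : in_sub par x t -> F t = \sum_(s <- ch t) F s.
  move=> Hs.
  rewrite (eq_big_seq (fun s => lam s * (v t * w s - w t * v s))); last first.
    by move=> s; rewrite Hch => /eqP E; rewrite /F E.
  have -> : \sum_(s <- ch t) lam s * (v t * w s - w t * v s) =
     v t * \sum_(s <- ch t) lam s * w s - w t * \sum_(s <- ch t) lam s * v s.
    rewrite !mulr_sumr -sumrB; apply: eq_bigr => s _; ring.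
  move: (Ev t Hs) (Ew t Hs); rewrite /F.
  set A := \sum_(s <- ch t) lam s * v s; set B := \sum_(s <- ch t) lam s * w s.
  move=> E1 E2; apply/eqP; rewrite -subr_eq0; apply/eqP.
  have -> : lam t * (v (par t) * w t - w (par t) * v t) - (v t * B - w t * A) =
    w t * (beta t * v t + A + lam t * v (par t) - r * v t)
    - v t * (beta t * w t + B + lam t * w (par t) - r * w t) by ring.
  by rewrite E1 E2 !subrr !mulr0 subrr.
have Fz n : forall t, lev t = n -> in_sub par x t -> F t = 0.
  elim: n => [|n IH] t Hlt Hs; rewrite Floc //; apply: big1_seq => s /andP [_].
    by rewrite Hch => /eqP E; move: (Hl s); rewrite E Hlt.
  rewrite Hch => /eqP E; apply: IH.
    by move: (Hl s); rewrite E Hlt => -[].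
  by apply: in_sub_par; rewrite E.
have := Fz _ _ erefl (in_sub_refl par x); rewrite /F wpx mul0r subr0.
move/eqP; rewrite mulf_eq0 (negbTE (Hlam x)) /= mulf_eq0 (negbTE wx) orbF.
by move/eqP.
Qed.

Definition insubb (V : eqType) (par : V -> V) (lev : V -> nat) y u :=
  (lev u <= lev y)%N && (iter (lev y - lev u) par u == y).

Lemma insubbP (V : eqType) (par : V -> V) (lev : V -> nat)
  (Hl : forall x, lev (par x) = (lev x).+1) y u :
  in_sub par y u <-> insubb par lev y u.
Proof.
split; first by move/(in_sub_lev Hl) => [H1 H2]; rewrite /insubb H1 H2 eqxx.
by case/andP => _ /eqP H; exists (lev y - lev u)%N.
Qed.

Lemma restrict (R : fieldType) (V : eqType) (par : V -> V) (lev : V -> nat)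
    (ch : V -> seq V) (lam beta : V -> R) (Ht : level_tree par lev ch)
    x r (w : V -> R)
  (Heq : forall t, in_sub par x t -> beta t * w t + \sum_(s <- ch t) lam s * w s
       + (if t == x then 0 else lam t * w (par t)) = r * w t)
  (wx : w x = 0) y (yc : y \in ch x) :
  let wy := fun u => if insubb par lev y u then w u else 0 in
  [/\ (forall t, ~ in_sub par y t -> wy t = 0),
      (forall t, in_sub par y t -> wy t = w t) &
      (forall t, in_sub par y t -> beta t * wy t + \sum_(s <- ch t) lam s * wy s
       + (if t == y then 0 else lam t * wy (par t)) = r * wy t)].
Proof.
have Ht' := Ht; case: Ht' => Hl Hu Hch Hne Hcon.
move=> wy.
have E1 t : ~ in_sub par y t -> wy t = 0.
  by move=> H; rewrite /wy; case: ifP => // /(insubbP Hl).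
have E2 t : in_sub par y t -> wy t = w t.
  by move=> /(insubbP Hl) H; rewrite /wy H.
have pyx : par y = x by apply/eqP; rewrite -Hch.
have Hxy : in_sub par x y by exists 1%N.
split=> // t Hs.
have Hxt := in_sub_trans Hxy Hs.
have tx : (t == x) = false.
  apply/negbTE/eqP => E; have [H _] := in_sub_lev Hl Hs.
  by move: H; rewrite E -pyx Hl ltnn.
rewrite [wy t]E2 // -(Heq t Hxt) tx.
congr (_ + _ + _).
  apply: eq_big_seq => s; rewrite Hch => /eqP E; rewrite E2 //.
  by apply: in_sub_par; rewrite E.
case: eqVneq => [E|ty]; first by rewrite E pyx wx mulr0.
by rewrite E2 //; apply: in_sub_par'.
Qed.

Lemma part2 (R : fieldType) (V : eqType) (par : V -> V) (lev : V -> nat)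
    (ch : V -> seq V) (lam beta : V -> R) (Ht : level_tree par lev ch)
    (Hlam : forall x, lam x != 0) r n :
  forall x (w : V -> R), lev x = n ->
  (forall t, ~ in_sub par x t -> w t = 0) ->
  (forall t, in_sub par x t -> beta t * w t + \sum_(s <- ch t) lam s * w s
       + (if t == x then 0 else lam t * w (par t)) = r * w t) ->
  (exists t, in_sub par x t /\ w t != 0) -> w x = 0 ->
  exists y y1 y2 : V,
    in_sub par x y /\ y1 \in ch y /\ y2 \in ch y /\ y1 != y2 /\
    (P par lev ch lam beta y1 y).[r] = 0 /\
    (P par lev ch lam beta y2 y).[r] = 0.
Proof.
have Ht' := Ht; case: Ht' => Hl Hu Hch Hne Hcon.
elim: n => [|m IH] x w Hx H0 Heq [t0 [Ht0 wt0]] wx.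
  have t0x : t0 != x by apply: contraNneq wt0 => ->; rewrite wx.
  by have := in_sub_ne Hl Ht0 t0x; rewrite Hx.
have t0x : t0 != x by apply: contraNneq wt0 => ->; rewrite wx.
have [yc Hsy] := anc_ch Ht Hx Ht0 t0x.
set y := iter _ par t0 in yc Hsy.
have pyx : forall z, z \in ch x -> par z = x by move=> z; rewrite Hch => /eqP.
have Hly : lev y = m by move: (Hl y); rewrite pyx // Hx => -[].
have [F1 F2 F3] := restrict Ht Heq wx yc.
have [wy0|wyn] := eqVneq (w y) 0.
  have Ex : exists t, in_sub par y t /\ (fun u => if insubb par lev y u then w u else 0) t != 0.
    by exists t0; split => //; rewrite F2.
  have Ey : (fun u => if insubb par lev y u then w u else 0) y = 0.
    by rewrite F2 ?wy0 //; exists 0%N.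
  have [z [y1 [y2 [Hz Rest]]]] := IH y _ Hly F1 F3 Ex Ey.
  exists z, y1, y2; split => //; apply: in_sub_trans Hz; by exists 1%N; rewrite /= pyx.
have Py : (P par lev ch lam beta y x).[r] = 0.
  rewrite -(pyx y yc); apply: (key1 Ht Hlam F1 F3).
  by rewrite F2 //; exists 0%N.
have Hsum := Heq x (in_sub_refl par x).
rewrite eqxx wx mulr0 addr0 add0r mulr0 (bigD1_seq y) //= in Hsum.
have [/hasP [y2 y2c /andP [y2y wy2]]|/hasPn Hn] :=
   boolP (has (fun s => (s != y) && (w s != 0)) (ch x)).
  have [G1 G2 G3] := restrict Ht Heq wx y2c.
  have Py2 : (P par lev ch lam beta y2 x).[r] = 0.
    rewrite -(pyx y2 y2c); apply: (key1 Ht Hlam G1 G3).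
    by rewrite G2 //; exists 0%N.
  exists x, y, y2; do !split => //; first exact: in_sub_refl.
  by rewrite eq_sym.
exfalso; move: Hsum; rewrite big1_seq ?addr0.
  by move/eqP; rewrite mulf_eq0 (negbTE (Hlam y)) (negbTE wyn).
move=> s /andP [sy sc]; have := Hn s sc; rewrite sy /= negbK => /eqP ->.
by rewrite mulr0.
Qed.

Theorem theorem2 (R : rcfType) (V : eqType) (par : V -> V) (lev : V -> nat)
    (ch : V -> seq V) (lam beta : V -> R)
    (Htree : level_tree par lev ch)
    (Hlam : forall x, 0 < lam x)
    (x : V) (r : R)
    (Heig : eigenvalue_Jx par ch lam beta x r) :
  (P par lev ch lam beta x (par x)).[r] = 0 \/
  exists y y1 y2 : V,
    in_sub par x y /\ y1 \in ch y /\ y2 \in ch y /\ y1 != y2 /\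
    (P par lev ch lam beta y1 y).[r] = 0 /\
    (P par lev ch lam beta y2 y).[r] = 0.
Proof.
have Hlam' : forall x, lam x != 0 by move=> z; rewrite gt_eqF.
case: Heig => w [H0 [Hnz Heq]].
have [wx|wx] := eqVneq (w x) 0.
  by right; apply: (part2 Htree Hlam' (erefl (lev x)) H0 Heq Hnz wx).
by left; apply: (key1 Htree Hlam' H0 Heq wx).
Qed.
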